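(* Let $(M,\phi,\xi,\eta,g)$ be a (connected) almost contact metric manifold with a $\phi$-invariant distribution $\mathcal{V}$, and let $\mathcal{H}=\mathcal{V}^\perp$. Then $\xi\in\Gamma(\mathcal{V})$ or $\xi\in\Gamma(\mathcal{H})$. Moreover, if $\xi\in\Gamma(\mathcal{V})$, then $\mathcal{H}\subseteq\mathcal{D}=\ker\eta$.
   Context: Almost contact metric structure: $(\phi,\xi,\eta,g)$ with $\phi$ a $(1,1)$-tensor, $\xi$ a vector field, $\eta$ a 1-form, $g$ Riemannian, $\phi^2=-I+\eta\otimes\xi$, $\eta(\xi)=1$, $g(\phi X,\phi Y)=g(X,Y)-\eta(X)\eta(Y)$. A distribution $\mathcal{V}$ is $\phi$-invariant if $\phi(\mathcal{V})\subseteq\mathcal{V}$. *)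

(* Defs.v *)
From HB Require Import structures.
From mathcomp Require Import all_boot all_order all_algebra.
From mathcomp Require Import all_classical all_reals all_analysis.
Set Implicit Arguments. Unset Strict Implicit. Unset Printing Implicit Defensive.
Import Order.TTheory GRing.Theory Num.Theory numFieldNormedType.Exports.
Local Open Scope ring_scope.
Local Open Scope classical_set_scope.

(* Model: the (tangent) bundle of M is a continuous rank-r subbundle of the
   trivial bundle M x R^N (Whitney embedding).  A subspace of R^N is encoded
   by a square matrix whose row space is that subspace; vectors are row
   vectors, (1,1)-tensors act on the right (v *m phi p), 1-forms are column
   vectors (eta(v) = (v *m eta p) 0 0), and metrics are Gram matrices. *)

Definition form1 {R : pzRingType} {N : nat} (e : 'cV[R]_N) (v : 'rV[R]_N) : R :=
  (v *m e) 0 0.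

Definition form2 {R : pzRingType} {N : nat} (G : 'M[R]_N) (u v : 'rV[R]_N) : R :=
  (u *m G *m v^T) 0 0.

Definition cont_subbundle {R : realType} {M : topologicalType} {N : nat}
    (k : nat) (E : M -> 'M[R]_N) : Prop :=
  forall p : M, exists (U : set M) (F : M -> 'M[R]_(k, N)),
    [/\ open U, U p, (forall q, U q -> {for q, continuous F}) &
        forall q, U q -> row_free (F q) /\ (F q == E q)%MS].

Definition almost_contact_metric {R : realType} {M : topologicalType} {N : nat}
    (T : M -> 'M[R]_N) (phi : M -> 'M[R]_N) (xi : M -> 'rV[R]_N)
    (eta : M -> 'cV[R]_N) (G : M -> 'M[R]_N) : Prop :=
  [/\ continuous phi, continuous xi, continuous eta & continuous G] /\
  (forall p, (xi p <= T p)%MS) /\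
  (forall p (v : 'rV[R]_N), (v <= T p)%MS -> (v *m phi p <= T p)%MS) /\
  (forall p u v, (u <= T p)%MS -> (v <= T p)%MS ->
     form2 (G p) u v = form2 (G p) v u) /\
  (forall p v, (v <= T p)%MS -> v != 0 -> 0 < form2 (G p) v v) /\
  (forall p v, (v <= T p)%MS ->
     v *m phi p *m phi p = - v + form1 (eta p) v *: xi p) /\
  (forall p, form1 (eta p) (xi p) = 1) /\
  (forall p u v, (u <= T p)%MS -> (v <= T p)%MS ->
     form2 (G p) (u *m phi p) (v *m phi p)
       = form2 (G p) u v - form1 (eta p) u * form1 (eta p) v).

Definition orth_compl {R : fieldType} {M : Type} {N : nat}
    (T V G : M -> 'M[R]_N) (p : M) (v : 'rV[R]_N) : Prop :=
  (v <= T p)%MS /\ forall w : 'rV[R]_N, (w <= V p)%MS -> form2 (G p) v w = 0.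

(* Main.v *)
Require Import Defs.
From HB Require Import structures.
From mathcomp Require Import all_boot all_order all_algebra.
From mathcomp Require Import all_classical all_reals all_analysis.
Import Order.TTheory GRing.Theory Num.Theory numFieldNormedType.Exports.
Local Open Scope ring_scope.
Local Open Scope classical_set_scope.


Lemma parity_sq (R : realType) (n : nat) (A : 'M[R]_n) :
  A *m A = (-1)%:M -> ~~ odd n.
Proof.
move=> AA; have := congr1 determinant AA.
rewrite det_mulmx det_scalar -signr_odd.
case: (odd n) => //= H.
have := sqr_ge0 (\det A); rewrite expr2 H expr1.
by rewrite ler0N1.
Qed.

Lemma form2_0r (R : realType) (N : nat) (G : 'M[R]_N) (u : 'rV[R]_N) :
  form2 G u 0 = 0.
Proof. by rewrite /form2 trmx0 mulmx0 mxE. Qed.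

Lemma xi_neq0 (R : realType) (N : nat) (eta : 'cV[R]_N) (xi : 'rV[R]_N) :
  form1 eta xi = 1 -> xi != 0.
Proof.
move=> h; apply/eqP => x0; move: h; rewrite x0 /form1 mul0mx mxE.
by move/eqP; rewrite eq_sym oner_eq0.
Qed.

Lemma phi_xi (R : realType) (N : nat) (T phi : 'M[R]_N) (xi : 'rV[R]_N)
  (eta : 'cV[R]_N) :
  (xi <= T)%MS ->
  (forall v : 'rV[R]_N, (v <= T)%MS -> (v *m phi <= T)%MS) ->
  (forall v, (v <= T)%MS -> v *m phi *m phi = - v + form1 eta v *: xi) ->
  form1 eta xi = 1 -> xi *m phi = 0.
Proof.
move=> hxT hphiT h2 he.
have h0 : xi *m phi *m phi = 0 by rewrite h2 // he scale1r addNr.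
set y := xi *m phi.
have hyT : (y <= T)%MS by apply: hphiT.
set c := form1 eta y.
have hy : y = c *: xi.
  have := h2 _ hyT; rewrite /y h0 mul0mx -/y.
  by move/eqP; rewrite eq_sym addrC subr_eq0 => /eqP ->.
have h1 : 0 = c *: y by rewrite -h0 -/y {1}hy -scalemxAl.
have : (c * c) *: xi = 0 by rewrite -scalerA -hy -h1.
move/eqP; rewrite scaler_eq0 (negbTE (@xi_neq0 _ _ _ _ he)) orbF mulf_eq0 orbb.
by move/eqP => c0; rewrite hy c0 scale0r.
Qed.

Lemma eta_phi (R : realType) (N : nat) (T phi : 'M[R]_N) (xi : 'rV[R]_N)
  (eta : 'cV[R]_N) (X : 'rV[R]_N) :
  (xi <= T)%MS ->
  (forall v : 'rV[R]_N, (v <= T)%MS -> (v *m phi <= T)%MS) ->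
  (forall v, (v <= T)%MS -> v *m phi *m phi = - v + form1 eta v *: xi) ->
  form1 eta xi = 1 -> (X <= T)%MS -> form1 eta (X *m phi) = 0.
Proof.
move=> hxT hphiT h2 he hX.
have px := @phi_xi _ _ _ _ _ _ hxT hphiT h2 he.
have YT : (X *m phi <= T)%MS by apply: hphiT.
have e1 := h2 _ YT.
have e2 : X *m phi *m phi *m phi = - (X *m phi).
  by rewrite (h2 X) // mulmxDl mulNmx -scalemxAl px scaler0 addr0.
rewrite e2 -{1}[- (X *m phi)]addr0 in e1.
move/addrI: e1 => /esym/eqP; rewrite scaler_eq0 (negbTE (@xi_neq0 _ _ _ _ he)) orbF.
by move/eqP.
Qed.

Lemma eta_g (R : realType) (N : nat) (T phi G : 'M[R]_N) (xi : 'rV[R]_N)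
  (eta : 'cV[R]_N) (X : 'rV[R]_N) :
  (xi <= T)%MS ->
  (forall v : 'rV[R]_N, (v <= T)%MS -> (v *m phi <= T)%MS) ->
  (forall v, (v <= T)%MS -> v *m phi *m phi = - v + form1 eta v *: xi) ->
  form1 eta xi = 1 ->
  (forall u v, (u <= T)%MS -> (v <= T)%MS ->
     form2 G (u *m phi) (v *m phi) = form2 G u v - form1 eta u * form1 eta v) ->
  (X <= T)%MS -> form1 eta X = form2 G X xi.
Proof.
move=> hxT hphiT h2 he hm hX.
have := hm _ _ hX hxT; rewrite (@phi_xi _ _ _ _ _ _ hxT hphiT h2 he) form2_0r he mulr1.
by move/eqP; rewrite eq_sym subr_eq0 => /eqP.
Qed.

Lemma phi2_mx (R : realType) (N k : nat) (T phi : 'M[R]_N) (xi : 'rV[R]_N)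
  (eta : 'cV[R]_N) (F : 'M[R]_(k, N)) :
  (forall v, (v <= T)%MS -> v *m phi *m phi = - v + form1 eta v *: xi) ->
  (F <= T)%MS -> F *m phi *m phi = - F + F *m eta *m xi.
Proof.
move=> h2 FT; apply/row_matrixP => i.
rewrite !row_mul linearD linearN /= !row_mul h2; last first.
  by apply: submx_trans FT; apply: row_sub.
by rewrite [row i F *m eta]mx11_scalar mul_scalar_mx.
Qed.
Arguments phi2_mx {R N k T phi xi eta F}.

Lemma even_case (R : realType) (N k : nat) (T phi : 'M[R]_N) (xi : 'rV[R]_N)
  (eta : 'cV[R]_N) (F : 'M[R]_(k, N)) :
  (forall v, (v <= T)%MS -> v *m phi *m phi = - v + form1 eta v *: xi) ->
  row_free F -> (F <= T)%MS -> (F *m phi <= F)%MS -> F *m eta = 0 ->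
  ~~ odd k.
Proof.
move=> h2 rF FT FphiF Fe0.
set J := F *m phi *m pinvmx F.
have hJ : J *m F = F *m phi by rewrite mulmxKpV.
apply: (@parity_sq R k J); apply: (row_free_inj rF) => /=.
rewrite -mulmxA hJ mulmxA hJ (phi2_mx h2 FT) Fe0 mul0mx addr0.
by rewrite mul_scalar_mx scaleN1r.
Qed.

Lemma odd_case (R : realType) (N k : nat) (T phi : 'M[R]_N) (xi : 'rV[R]_N)
  (eta : 'cV[R]_N) (F : 'M[R]_(k, N)) :
  (xi <= T)%MS ->
  (forall v : 'rV[R]_N, (v <= T)%MS -> (v *m phi <= T)%MS) ->
  (forall v, (v <= T)%MS -> v *m phi *m phi = - v + form1 eta v *: xi) ->
  form1 eta xi = 1 ->
  row_free F -> (F <= T)%MS -> (F *m phi <= F)%MS -> (xi <= F)%MS ->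
  odd k.
Proof.
move=> hxT hphiT h2 he rF FT FphiF xiF.
set J := F *m phi *m pinvmx F.
have hJ : J *m F = F *m phi by rewrite mulmxKpV.
set x := xi *m pinvmx F.
have hx : x *m F = xi by rewrite mulmxKpV.
set e := F *m eta.
have px := @phi_xi _ _ _ _ _ _ hxT hphiT h2 he.
have Fphie : F *m phi *m eta = 0.
  apply/row_matrixP => i; rewrite row0 !row_mul [LHS]mx11_scalar.
  have rT : (row i F <= T)%MS by apply: submx_trans FT; apply: row_sub.
  have := @eta_phi _ _ _ _ _ _ (row i F) hxT hphiT h2 he rT.
  by rewrite /form1 => ->; rewrite raddf0.
set J' : 'M[R]_(k + 1) := block_mx J e (- x) 0.
have : J' *m J' = (-1)%:M.
  rewrite mulmx_block (scalar_mx_block k 1); congr block_mx.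
  - apply: (row_free_inj rF) => /=.
    rewrite mulmxDl -mulmxA hJ mulmxA hJ (phi2_mx h2 FT) mulmxN mulNmx.
    by rewrite -[e *m x *m F]mulmxA hx -/e addrK mul_scalar_mx scaleN1r.
  - by rewrite mulmx0 addr0 /e mulmxA hJ Fphie.
  - apply: (row_free_inj rF) => /=.
    by rewrite !mul0mx addr0 !mulNmx -[x *m J *m F]mulmxA hJ mulmxA hx px oppr0.
  - rewrite mulmx0 addr0 mulNmx /e mulmxA hx [xi *m eta]mx11_scalar.
    by rewrite -/(form1 eta xi) he raddfN.
move/parity_sq; rewrite addn1 /=; by case: (odd k).
Qed.

Arguments odd_case {R N k T phi xi eta F}.
Arguments even_case {R N k T phi xi eta F}.

Theorem lemma2p1 (R : realType) (M : topologicalType) (N r k : nat)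
    (T : M -> 'M[R]_N) (phi : M -> 'M[R]_N) (xi : M -> 'rV[R]_N)
    (eta : M -> 'cV[R]_N) (G : M -> 'M[R]_N) (V : M -> 'M[R]_N) :
  connected [set: M] ->
  cont_subbundle r T ->
  almost_contact_metric T phi xi eta G ->
  (* V is a distribution (continuous subbundle of T of constant rank k) *)
  cont_subbundle k V ->
  (forall p, (V p <= T p)%MS) ->
  (* V is phi-invariant *)
  (forall p (v : 'rV[R]_N), (v <= V p)%MS -> (v *m phi p <= V p)%MS) ->
  ((forall p, (xi p <= V p)%MS) \/ (forall p, orth_compl T V G p (xi p))) /\
  ((forall p, (xi p <= V p)%MS) ->
     forall p (v : 'rV[R]_N), orth_compl T V G p v -> form1 (eta p) v = 0).
Proof.
move=> _ _ hacm hV hVT hinv.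
case: hacm => [_ [hxT [hphiT [hsym [_ [h2 [he hm]]]]]]].
have fr p : exists F : 'M[R]_(k, N), row_free F /\ (F == V p)%MS.
  case: (hV p) => U [F [_ Up _ hF]]; exists (F p); exact: hF p Up.
have stab p (F : 'M[R]_(k, N)) : (F <= V p)%MS -> (V p <= F)%MS ->
    (F *m phi p <= F)%MS.
  move=> FV VF; apply/row_subP => i; rewrite row_mul.
  apply: submx_trans VF; apply: hinv; apply: submx_trans FV; apply: row_sub.
have oddV p : (xi p <= V p)%MS -> odd k.
  move=> xV; case: (fr p) => F [rF /andP [FV VF]].
  apply: (odd_case (hxT p) (hphiT p) (h2 p) (he p) rF).
  - exact: submx_trans FV (hVT p).
  - exact: stab.
  - exact: submx_trans xV VF.
have evenV p : (forall v, (v <= V p)%MS -> form1 (eta p) v = 0) -> ~~ odd k.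
  move=> H; case: (fr p) => F [rF /andP [FV VF]].
  apply: (even_case (h2 p) rF).
  - exact: submx_trans FV (hVT p).
  - exact: stab.
  apply/row_matrixP => i; rewrite row0 row_mul [LHS]mx11_scalar.
  have := H (row i F) (submx_trans (row_sub i F) FV).
  by rewrite /form1 => ->; rewrite raddf0.
have dich p : ~~ (xi p <= V p)%MS ->
    forall v, (v <= V p)%MS -> form1 (eta p) v = 0.
  move=> nx v hv; apply/eqP; apply: contraNT nx => ne.
  have : ((v *m phi p *m phi p + v)%R <= V p)%MS by apply: addmx_sub (hinv _ _ (hinv _ _ hv)) hv.
  rewrite (h2 p v (submx_trans hv (hVT p))) addrC addNKr.
  move/(scalemx_sub (form1 (eta p) v)^-1); rewrite scalerA mulVf // scale1r.
  done.
have orth p : ~~ (xi p <= V p)%MS -> orth_compl T V G p (xi p).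
  move=> nx; split; first exact: hxT.
  move=> w hw; have wT := submx_trans hw (hVT p).
  rewrite (hsym p _ _ (hxT p) wT).
  rewrite -(@eta_g _ _ _ _ (G p) _ _ w (hxT p) (hphiT p) (h2 p) (he p) (hm p) wT).
  exact: dich.
split.
  case: (boolP (odd k)) => ok.
  - left => p; apply/negPn/negP => nx.
    by have := evenV p (dich p nx); rewrite ok.
  - right => p; apply: orth; apply/negP => x.
    by have := oddV p x; rewrite (negbTE ok).
move=> allx p v [vT vo].
rewrite (@eta_g _ _ _ _ (G p) _ _ v (hxT p) (hphiT p) (h2 p) (he p) (hm p) vT).
exact: vo.
Qed.
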